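(* For every integer $n\ge 0$, $$\Phi^{(1)}[aq^n; b, b'; c; x, y] = \sum_{k=0}^n \sum_{i=0}^k \begin{bmatrix} n \\ k \end{bmatrix} \begin{bmatrix} k \\ i \end{bmatrix} \frac{(b; q)_{k-i} (b'; q)_i}{(c; q)_k} q^{2\binom{k}{2}} a^k x^{k-i} y^i\, \Phi^{(1)}[aq^k; bq^{k-i}, b'q^i; cq^k; xq^i, y]$$ and $$\Phi^{(1)}[aq^{-n}; b, b'; c; x, y] = \sum_{k=0}^n \sum_{i=0}^k \begin{bmatrix} n \\ k \end{bmatrix} \begin{bmatrix} k \\ i \end{bmatrix} \frac{(b; q)_{k-i} (b'; q)_i}{(c; q)_k} q^{\binom{k}{2} - nk} (-a)^k x^{k-i} y^i\, \Phi^{(1)}[a; bq^{k-i}, b'q^i; cq^k; xq^i, y].$$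
   Context: Let $q$ be a complex number with $0<|q|<1$. For complex $z$ and integer $m\ge 0$, $(z;q)_m=\prod_{j=0}^{m-1}(1-zq^j)$, with $(z;q)_0=1$. For integers $0\le k\le n$, $\begin{bmatrix} n \\ k \end{bmatrix}=\frac{(q;q)_n}{(q;q)_k(q;q)_{n-k}}$ is the $q$-binomial coefficient. The $q$-Appell function $\Phi^{(1)}$ is $$\Phi^{(1)}[a; b, b'; c; x, y] = \sum_{m, n \geq 0} \frac{(a; q)_{m+n} (b; q)_m (b'; q)_n}{(q; q)_m (q; q)_n (c; q)_{m+n}} x^m y^n.$$ Identities are understood as identities of power series in $x,y$ (formal, or convergent for small $|x|,|y|$), with complex parameters chosen so that no denominator occurring vanishes. *)

(* Defs.v *)
(* Complex numbers are modelled as R[i] = complex R for a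
   real closed field R (R = the reals gives the usual complex numbers). *)
From mathcomp Require Import all_boot all_order all_algebra.
From mathcomp Require Export complex.
Set Implicit Arguments. Unset Strict Implicit. Unset Printing Implicit Defensive.
Import Order.TTheory GRing.Theory Num.Theory.
Local Open Scope ring_scope.

Section Defs.
Variable C : fieldType.

Definition qpoch (z q : C) (m : nat) : C := \prod_(j < m) (1 - z * q ^+ j).

(* q-binomial coefficient [n choose k]_q (used with 0 <= k <= n) *)
Definition qbinom (q : C) (n k : nat) : C :=
  qpoch q q n / (qpoch q q k * qpoch q q (n - k)).

(* A formal power series in x, y, represented by its coefficient function:
   s m n = coefficient of x^m y^n. *)
Definition series := nat -> nat -> C.

Definition Phi1 (q a b b' c : C) : series := fun m n =>
  qpoch a q (m + n) * qpoch b q m * qpoch b' q n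
  / (qpoch q q m * qpoch q q n * qpoch c q (m + n)).

(* substitution x := t * x in a formal series *)
Definition subst_x (t : C) (s : series) : series := fun m n => t ^+ m * s m n.

(* multiplication of a formal series by the monomial x^i y^j *)
Definition mul_mono (i j : nat) (s : series) : series := fun m n =>
  if (i <= m)%N && (j <= n)%N then s (m - i)%N (n - j)%N else 0.
End Defs.

(* Main.v *)
Require Import Defs.
From mathcomp Require Import all_boot all_order all_algebra.
From mathcomp Require Import complex.
From mathcomp Require Import ring lra zify.
Import Order.TTheory GRing.Theory Num.Theory.
Local Open Scope ring_scope.

Section Gen.
Variable F : fieldType.
Variable q : F.
Hypothesis hq0 : q != 0.
Hypothesis hq : forall j : nat, 1 - q ^+ j.+1 != 0.

Lemma qpoch0 z : qpoch z q 0 = 1.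
Proof. by rewrite /qpoch big_ord0. Qed.

Lemma qpochS z m : qpoch z q m.+1 = qpoch z q m * (1 - z * q ^+ m).
Proof. by rewrite /qpoch big_ord_recr. Qed.

Lemma qpoch_split z s t : qpoch z q (s + t) = qpoch z q s * qpoch (z * q ^+ s) q t.
Proof.
elim: t => [|t IH]; first by rewrite addn0 qpoch0 mulr1.
by rewrite addnS !qpochS IH exprD !mulrA.
Qed.

Lemma qpoch_first A L : qpoch A q L.+1 = (1 - A) * qpoch (A * q) q L.
Proof.
by rewrite -add1n qpoch_split expr1 /qpoch big_ord1 expr0 mulr1.
Qed.

Lemma one_step A L :
  qpoch (A * q) q L = qpoch A q L + (1 - q ^+ L) * A * qpoch (A * q) q L.-1.
Proof.
case: L => [|L]; first by rewrite !qpoch0 expr0 subrr !mul0r addr0.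
rewrite /= qpochS qpoch_first exprS; ring.
Qed.

Definition qqp m := qpoch q q m.

Lemma qqpS m : qqp m.+1 = qqp m * (1 - q ^+ m.+1).
Proof. by rewrite /qqp qpochS exprS. Qed.

Lemma qqp_neq0 m : qqp m != 0.
Proof.
rewrite /qqp /qpoch; apply/prodf_neq0 => j _; by rewrite -exprS hq.
Qed.

Definition fall m j := \prod_(t < j) (1 - q ^+ (m - t)).

Lemma fall0 m : fall m 0 = 1.
Proof. by rewrite /fall big_ord0. Qed.

Lemma fallS m j : fall m j.+1 = fall m j * (1 - q ^+ (m - j)).
Proof. by rewrite /fall big_ord_recr. Qed.

Lemma fall_gt m j : (m < j)%N -> fall m j = 0.
Proof.
elim: j => [//|j IH] h; rewrite fallS.
case: (ltngtP m j) => [hj|hj|->]; first by rewrite IH ?mul0r.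
  by exfalso; lia.
by rewrite subnn expr0 subrr mulr0.
Qed.

Lemma fall_qqp m j : (j <= m)%N -> fall m j * qqp (m - j) = qqp m.
Proof.
elim: j => [|j IH] h; first by rewrite fall0 subn0 mul1r.
rewrite fallS -IH; last by lia.
have -> : (m - j = (m - j.+1).+1)%N by lia.
rewrite qqpS; ring.
Qed.

Definition G n k := if (k <= n)%N then qbinom q n k else 0.

Lemma G_gt n k : (n < k)%N -> G n k = 0.
Proof. by rewrite /G ltnNge => /negbTE ->. Qed.

Lemma Gn0 n : G n 0 = 1.
Proof.
rewrite /G /qbinom /= subn0 -/(qqp n) -/(qqp 0) /qqp qpoch0 mul1r.
by rewrite divff // qqp_neq0.
Qed.

Lemma Gnn n : G n n = 1.
Proof.
rewrite /G leqnn /qbinom subnn -/(qqp n) -/(qqp 0) /qqp qpoch0 mulr1.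
by rewrite divff // qqp_neq0.
Qed.

Lemma Pascal n k :
  G n.+1 k.+1 = q ^+ k.+1 * G n k.+1 + G n k /\
  G n.+1 k.+1 = G n k.+1 + q ^+ (n - k) * G n k.
Proof.
case: (ltngtP k n) => h.
- have [r ->] : exists r, n = (k + r).+1 by exists (n - k.+1)%N; lia.
  rewrite /G.
  have -> : (k.+1 <= (k + r).+2)%N by lia.
  have -> : (k.+1 <= (k + r).+1)%N by lia.
  have -> : (k <= (k + r).+1)%N by lia.
  rewrite /qbinom -!/(qqp _).
  have -> : ((k + r).+2 - k.+1 = r.+1)%N by lia.
  have -> : ((k + r).+1 - k.+1 = r)%N by lia.
  have -> : ((k + r).+1 - k = r.+1)%N by lia.
  rewrite !qqpS.
  have e : q ^+ (k + r).+2 = q ^+ k.+1 * q ^+ r.+1 by rewrite -exprD; congr (_ ^+ _); lia.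
  rewrite e.
  have h1 := qqp_neq0 k; have h2 := qqp_neq0 r; have h3 := hq k; have h4 := hq r.
  have h5 := qqp_neq0 (k + r).
  split; field; rewrite ?h1 ?h2 ?h3 ?h4 //.
- rewrite !G_gt //; try lia. split; ring.
- subst k; rewrite !Gnn G_gt // subnn expr0; split; ring.
Qed.

Lemma resumA n (W : nat -> F) :
  \sum_(0 <= i < n.+1) (q ^+ i * G n i * W i + G n i * W i.+1) =
  \sum_(0 <= i < n.+2) G n.+1 i * W i.
Proof.
rewrite big_split /= [RHS]big_nat_recl //= Gn0.
under [in RHS]eq_bigr => i _ do rewrite (proj1 (Pascal n i)) mulrDl.
rewrite big_split /= addrA; congr (_ + _).
have -> : \sum_(0 <= i < n.+1) q ^+ i * G n i * W i =
  \sum_(0 <= i < n.+2) q ^+ i * G n i * W i.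
  by rewrite [RHS]big_nat_recr //= G_gt // mulr0 mul0r addr0.
rewrite [LHS]big_nat_recl //= expr0 Gn0 !mul1r; congr (_ + _).
Qed.

Lemma resumB n (W : nat -> F) :
  \sum_(0 <= i < n.+1) (G n i * W i + q ^+ (n - i) * G n i * W i.+1) =
  \sum_(0 <= i < n.+2) G n.+1 i * W i.
Proof.
rewrite big_split /= [RHS]big_nat_recl //= Gn0.
under [in RHS]eq_bigr => i _ do rewrite (proj2 (Pascal n i)) mulrDl.
rewrite big_split /= addrA; congr (_ + _).
  have -> : \sum_(0 <= i < n.+1) G n i * W i =
    \sum_(0 <= i < n.+2) G n i * W i.
    by rewrite [RHS]big_nat_recr //= G_gt // mul0r addr0.
  by rewrite [LHS]big_nat_recl //= Gn0.
Qed.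


Lemma Zid n a N :
  qpoch (a * q ^+ n) q N =
  \sum_(0 <= k < n.+1) G n k *
     (q ^+ (2 * 'C(k, 2)) * a ^+ k * qpoch (a * q ^+ k) q (N - k) * fall N k).
Proof.
elim: n a => [|n IH] a.
  by rewrite big_nat1 Gn0 /= fall0 subn0 !expr0 !mulr1 !mul1r.
have -> : a * q ^+ n.+1 = (a * q) * q ^+ n by rewrite exprS mulrA.
rewrite IH -(resumA n (fun k => q ^+ (2 * 'C(k, 2)) * a ^+ k *
   qpoch (a * q ^+ k) q (N - k) * fall N k)).
apply: eq_big_nat => k /andP[_ hk].
have -> : a * q * q ^+ k = (a * q ^+ k) * q by rewrite -mulrA -exprS exprSr mulrA.
rewrite one_step fallS binS bin1 mulnDr exprD -subnS exprSr exprMn exprS.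
have -> : (2 * k = k + k)%N by lia.
rewrite exprD.
have -> : a * (q * q ^+ k) = a * q ^+ k * q by rewrite (mulrC q) mulrA.
ring.
Qed.

Lemma Zid2 n a N :
  qpoch (a * (q ^+ n)^-1) q N =
  \sum_(0 <= k < n.+1) G n k *
     (q ^+ 'C(k, 2) / q ^+ (n * k) * (- a) ^+ k * qpoch a q (N - k) * fall N k).
Proof.
elim: n a => [|n IH] a.
  by rewrite big_nat1 Gn0 /= fall0 subn0 !expr0 invr1 !mulr1 !mul1r ?divr1 ?invr1 ?mulr1.
have -> : a * (q ^+ n.+1)^-1 = (a / q) * (q ^+ n)^-1 by rewrite exprS invfM mulrA.
rewrite IH -(resumB n (fun k => q ^+ 'C(k, 2) / q ^+ (n.+1 * k) * (- a) ^+ k *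
   qpoch a q (N - k) * fall N k)).
apply: eq_big_nat => k /andP[_ hk].
have os := one_step (a / q) (N - k).
rewrite mulfVK // in os.
have -> : qpoch (a / q) q (N - k) =
   qpoch a q (N - k) - (1 - q ^+ (N - k)) * (a / q) * qpoch a q (N - k).-1.
  by rewrite os; ring.
rewrite fallS binS bin1 -subnS.
have hkn : (k <= n)%N by lia.
have eqn : q ^+ n = q ^+ (n - k) * q ^+ k by rewrite -exprD subnK.
have e1 : q ^+ (n.+1 * k.+1) = q ^+ (n * k) * q ^+ k * q ^+ n * q.
  rewrite -!exprD -exprSr; congr (_ ^+ _); nia.
have e2 : q ^+ (n.+1 * k) = q ^+ (n * k) * q ^+ k.
  by rewrite -!exprD; congr (_ ^+ _); nia.
rewrite e1 e2 eqn exprD.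
have -> : (- (a / q)) ^+ k = (- a) ^+ k / q ^+ k by rewrite -mulNr exprMn exprVn.
rewrite exprS.
have h1 : q ^+ k != 0 by rewrite expf_neq0.
have h2 : q ^+ (n * k) != 0 by rewrite expf_neq0.
have h3 : q ^+ (n - k) != 0 by rewrite expf_neq0.
field; rewrite ?h1 ?h2 ?h3 ?hq0 //.
Qed.

Lemma Vid m p k :
  fall (m + p) k =
  \sum_(0 <= i < k.+1) G k i * (q ^+ (i * (m - (k - i))) * fall m (k - i) * fall p i).
Proof.
elim: k => [|k IH].
  by rewrite big_nat1 Gn0 !fall0 mul0n expr0 !mulr1.
rewrite fallS IH big_distrl -(resumA k (fun i => q ^+ (i * (m - (k.+1 - i))) *
   fall m (k.+1 - i) * fall p i)) /=.
apply: eq_big_nat => i /andP[_ hi].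
have hik : (i <= k)%N by lia.
rewrite subSS (subSn hik) subnS !fallS mulSn.
case: (leqP (k - i) m) => h1; last by rewrite (fall_gt _ _ h1); ring.
case: (leqP i p) => h2; last by rewrite (fall_gt _ _ h2); ring.
have e : (m + p - k = (m - (k - i)) + (p - i))%N by lia.
rewrite e exprD.
move: (m - (k - i))%N => x.
case: x => [|x] /=; first by rewrite !expr0 muln0 ?expr0; ring.
rewrite mulnS !exprD exprS; ring.
Qed.

Lemma qpoch_neq0 c (hc : forall j : nat, 1 - c * q ^+ j != 0) k s :
  qpoch (c * q ^+ k) q s != 0.
Proof.
rewrite /qpoch; apply/prodf_neq0 => j _; by rewrite -mulrA -exprD hc.
Qed.

Definition K b b' c m p :=
  qpoch b q m * qpoch b' q p / (qqp m * qqp p * qpoch c q (m + p)).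

Lemma term_gen A b b' c d n k i m p (hik : (i <= k)%N)
  (hc : forall j : nat, 1 - c * q ^+ j != 0) :
  (G n k * G k i * (qpoch b q (k - i) * qpoch b' q i / qpoch c q k) * d)
   * mul_mono (k - i) i (subst_x (q ^+ i)
       (Phi1 q A (b * q ^+ (k - i)) (b' * q ^+ i) (c * q ^+ k))) m p
  = K b b' c m p * ((G n k * d * qpoch A q (m + p - k)) *
      (G k i * (q ^+ (i * (m - (k - i))) * fall m (k - i) * fall p i))).
Proof.
rewrite /mul_mono /subst_x /Phi1 /K.
case: ifP => [/andP [h1 h2] | h]; last first.
  move/negbT: h; rewrite negb_and -!ltnNge => /orP [h|h];
  rewrite (fall_gt _ _ h); ring.
have ek : k = ((k - i) + i)%N by rewrite subnK.
move: (k - i)%N ek h1 => j ek h1; subst k.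
move: (m - j)%N (subnKC h1) => m' em; subst m.
move: (p - i)%N (subnKC h2) => p' ep; subst p.
have -> : (j + m' + (i + p') - (j + i) = m' + p')%N by lia.
rewrite (qpoch_split b j m') (qpoch_split b' i p').
have -> : (j + m' + (i + p') = (j + i) + (m' + p'))%N by lia.
rewrite (qpoch_split c (j + i)).
have ef1 : fall (j + m') j = qqp (j + m') / qqp m'.
  by rewrite -(@fall_qqp (j + m') j (leq_addr m' j)) addKn mulfK // qqp_neq0.
have ef2 : fall (i + p') i = qqp (i + p') / qqp p'.
  by rewrite -(@fall_qqp (i + p') i (leq_addr p' i)) addKn mulfK // qqp_neq0.
rewrite ef1 ef2 -exprM.
have c1 := @qpoch_neq0 c hc 0 (j + i); rewrite expr0 mulr1 in c1.
have c2 := @qpoch_neq0 c hc (j + i) (m' + p').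
have n1 := qqp_neq0 m'; have n2 := qqp_neq0 p'.
have n3 := qqp_neq0 (j + m'); have n4 := qqp_neq0 (i + p').
rewrite /qqp in n1 n2 n3 n4 *.
field; rewrite ?c1 ?c2 ?n1 ?n2 ?n3 ?n4 //.
Qed.

Lemma main1 a b b' c (hc : forall j : nat, 1 - c * q ^+ j != 0) n m p :
     Phi1 q (a * q ^+ n) b b' c m p =
     \sum_(k < n.+1) \sum_(i < k.+1)
        (qbinom q n k * qbinom q k i
         * (qpoch b q (k - i) * qpoch b' q i / qpoch c q k)
         * q ^+ (2 * 'C(k, 2)) * a ^+ k)
        * mul_mono (k - i) i
            (subst_x (q ^+ i)
               (Phi1 q (a * q ^+ k) (b * q ^+ (k - i)) (b' * q ^+ i) (c * q ^+ k))) m p.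
Proof.
symmetry.
transitivity (K b b' c m p * \sum_(k < n.+1) \sum_(i < k.+1)
   ((G n k * (q ^+ (2 * 'C(k, 2)) * a ^+ k) * qpoch (a * q ^+ k) q (m + p - k)) *
    (G k i * (q ^+ (i * (m - (k - i))) * fall m (k - i) * fall p i)))).
  rewrite big_distrr; apply: eq_bigr => k _; rewrite big_distrr; apply: eq_bigr => i _.
  have hik : (i <= k)%N by rewrite -ltnS ltn_ord.
  have hkn : (k <= n)%N by rewrite -ltnS ltn_ord.
  apply: (etrans _ (term_gen (a * q ^+ k) b b' c (q ^+ (2 * 'C(k, 2)) * a ^+ k) n k i m p hik hc)).
  by rewrite /G hik hkn /= !mulrA.
have Vord : forall k : nat, \sum_(i < k.+1)
   G k i * (q ^+ (i * (m - (k - i))) * fall m (k - i) * fall p i) = fall (m + p) k.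
  by move=> k; rewrite Vid big_mkord.
under eq_bigr => k _ do rewrite -big_distrr Vord.
have Z' : \sum_(k < n.+1) (G n k * (q ^+ (2 * 'C(k, 2)) * a ^+ k) *
     qpoch (a * q ^+ k) q (m + p - k)) * fall (m + p) k = qpoch (a * q ^+ n) q (m + p).
  by rewrite Zid big_mkord; apply: eq_bigr => k _; ring.
by rewrite Z' /K /Phi1 /qqp; ring.
Qed.

Lemma main2 a b b' c (hc : forall j : nat, 1 - c * q ^+ j != 0) n m p :
     Phi1 q (a * q ^- n) b b' c m p =
     \sum_(k < n.+1) \sum_(i < k.+1)
        (qbinom q n k * qbinom q k i
         * (qpoch b q (k - i) * qpoch b' q i / qpoch c q k)
         * q ^ ('C(k, 2)%:Z - (n * k)%:Z) * (- a) ^+ k)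
        * mul_mono (k - i) i
            (subst_x (q ^+ i)
               (Phi1 q a (b * q ^+ (k - i)) (b' * q ^+ i) (c * q ^+ k))) m p.
Proof.
symmetry.
have ez : forall k : nat, q ^ ('C(k, 2)%:Z - (n * k)%:Z) = q ^+ 'C(k, 2) / q ^+ (n * k).
  by move=> k; rewrite expfzDr // -exprnP -exprnN.
transitivity (K b b' c m p * \sum_(k < n.+1) \sum_(i < k.+1)
   ((G n k * (q ^+ 'C(k, 2) / q ^+ (n * k) * (- a) ^+ k) * qpoch a q (m + p - k)) *
    (G k i * (q ^+ (i * (m - (k - i))) * fall m (k - i) * fall p i)))).
  rewrite big_distrr; apply: eq_bigr => k _; rewrite big_distrr; apply: eq_bigr => i _.
  have hik : (i <= k)%N by rewrite -ltnS ltn_ord.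
  have hkn : (k <= n)%N by rewrite -ltnS ltn_ord.
  apply: (etrans _ (term_gen a b b' c (q ^+ 'C(k, 2) / q ^+ (n * k) * (- a) ^+ k) n k i m p hik hc)).
  by rewrite ez /G hik hkn /= !mulrA.
have Vord : forall k : nat, \sum_(i < k.+1)
   G k i * (q ^+ (i * (m - (k - i))) * fall m (k - i) * fall p i) = fall (m + p) k.
  by move=> k; rewrite Vid big_mkord.
under eq_bigr => k _ do rewrite -big_distrr Vord.
have Z' : \sum_(k < n.+1) (G n k * (q ^+ 'C(k, 2) / q ^+ (n * k) * (- a) ^+ k) *
     qpoch a q (m + p - k)) * fall (m + p) k = qpoch (a * (q ^+ n)^-1) q (m + p).
  by rewrite Zid2 big_mkord; apply: eq_bigr => k _; ring.
by rewrite Z' /K /Phi1 /qqp; ring.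
Qed.

End Gen.

Local Open Scope complex_scope.

Theorem theorem2 (R : rcfType) (q a b b' c : R[i]) (n : nat)
  (hq0 : 0 < `|q|) (hq1 : `|q| < 1)
  (hc : forall j : nat, 1 - c * q ^+ j != 0) :
  (forall m p : nat,
     Phi1 q (a * q ^+ n) b b' c m p =
     \sum_(k < n.+1) \sum_(i < k.+1)
        (qbinom q n k * qbinom q k i
         * (qpoch b q (k - i) * qpoch b' q i / qpoch c q k)
         * q ^+ (2 * 'C(k, 2)) * a ^+ k)
        * mul_mono (k - i) i
            (subst_x (q ^+ i)
               (Phi1 q (a * q ^+ k) (b * q ^+ (k - i)) (b' * q ^+ i) (c * q ^+ k))) m p)
  /\
  (forall m p : nat,
     Phi1 q (a * q ^- n) b b' c m p =
     \sum_(k < n.+1) \sum_(i < k.+1)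
        (qbinom q n k * qbinom q k i
         * (qpoch b q (k - i) * qpoch b' q i / qpoch c q k)
         * q ^ ('C(k, 2)%:Z - (n * k)%:Z) * (- a) ^+ k)
        * mul_mono (k - i) i
            (subst_x (q ^+ i)
               (Phi1 q a (b * q ^+ (k - i)) (b' * q ^+ i) (c * q ^+ k))) m p).
Proof.
have q0 : q != 0 by rewrite -normr_gt0.
have qj : forall j : nat, 1 - q ^+ j.+1 != 0.
  move=> j; apply/negP; rewrite subr_eq0 => /eqP h.
  have e : `|q| ^+ j.+1 = 1 by rewrite -normrX -h normr1.
  have := exprn_ilt1 j.+1 (normr_ge0 q) hq1.
  by rewrite e ltxx.
split => m p.
  exact: (@main1 _ q q0 qj a b b' c hc n m p).
exact: (@main2 _ q q0 qj a b b' c hc n m p).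
Qed.
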